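(* For all integers $s\geq 3$, $\chi(\operatorname{KG}(2s+2,2)_{s-\operatorname{stab}})=s+2$, and $\operatorname{KG}(2s+2,2)_{s-\operatorname{stab}}$ is not $\chi$-critical.
   Context: For integers $s,k\geq 2$ and $n\geq ks$, a subset $S\subseteq[n]=\{1,\dots,n\}$ is $s$-stable if $s\leq |i-j|\leq n-s$ for all distinct $i,j\in S$. The $s$-stable Kneser graph $\operatorname{KG}(n,k)_{s-\operatorname{stab}}$ has as vertices the $s$-stable $k$-subsets of $[n]$, two vertices being adjacent iff they are disjoint. A graph $G$ is $\chi$-critical (vertex critical) if every proper subgraph of $G$ has chromatic number strictly less than $\chi(G)$. *)

(* Defs.v *)
From mathcomp Require Import all_boot.
Set Implicit Arguments. Unset Strict Implicit. Unset Printing Implicit Defensive.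

(* Graphs: a finite vertex set V : {set T} together with an adjacency
   relation e : rel T (only its restriction to V matters). *)

Definition colorable (T : finType) (V : {set T}) (e : rel T) (k : nat) : Prop :=
  exists f : T -> nat,
    (forall x, x \in V -> f x < k) /\
    (forall x y, x \in V -> y \in V -> e x y -> f x <> f y).

Definition chromatic_number (T : finType) (V : {set T}) (e : rel T) (chi : nat) : Prop :=
  colorable V e chi /\ (forall k, colorable V e k -> chi <= k).

Definition chi_critical (T : finType) (V : {set T}) (e : rel T) : Prop :=
  forall U : {set T}, U \proper V ->
    forall a b, chromatic_number U e a -> chromatic_number V e b -> a < b.

(* [n] = {1,...,n} is modelled by 'I_n (i represents i+1; differences
   are unchanged). *)
Definition dist (i j : nat) : nat := maxn i j - minn i j.

Definition s_stable (n s : nat) (A : {set 'I_n}) : bool :=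
  [forall i in A, forall j in A,
     (i != j) ==> ((s <= dist i j) && (dist i j <= n - s))].

Definition KG_stab_V (n k s : nat) : {set {set 'I_n}} :=
  [set A : {set 'I_n} | (#|A| == k) && s_stable s A].

Definition KG_adj (n : nat) : rel {set 'I_n} :=
  fun A B => [disjoint A & B].

(* Main.v *)
Require Import Defs.
From mathcomp Require Import all_boot zify.

Lemma sumL1 m (c : nat -> nat) : (forall j, j < m -> 1 <= c j) -> m <= \sum_(0 <= j < m) c j.
Proof.
elim: m => [|m IH] h; first by [].
rewrite big_nat_recr //=.
have := IH (fun j hj => h j (ltnW (leq_trans hj (leqnn _)))).
have := h m (ltnSn m). lia.
Qed.

Lemma sumL2 m (c : nat -> nat) i : i < m -> 2 <= c i -> (forall j, j < m -> 1 <= c j) ->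
  m.+1 <= \sum_(0 <= j < m) c j.
Proof.
elim: m => [|m IH] // hi h2 h; rewrite big_nat_recr //=.
have hh : forall j, j < m -> 1 <= c j by move=> j hj; apply: h; lia.
case: (ltngtP i m) => him.
- have := IH him h2 hh. have := h m (ltnSn m). lia.
- lia.
- subst i. have := @sumL1 _ _ hh. lia.
Qed.

Lemma sumL3 m (c : nat -> nat) : 2 <= m -> 2 <= c 0 -> 2 <= c m.-1 ->
  (forall j, j < m -> 1 <= c j) -> m.+2 <= \sum_(0 <= j < m) c j.
Proof.
case: m => [|m] //= hm h0 hm1 h; rewrite big_nat_recr //=.
have hh : forall j, j < m -> 1 <= c j by move=> j hj; apply: h; lia.
have := @sumL2 m c 0 (_ : 0 < m) h0 hh. lia.
Qed.

Lemma comb (s : nat) (q : nat -> bool) : 3 <= s ->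
 (forall a b, a < 2*s+2 -> b < 2*s+2 -> a != b -> s <= dist a b -> dist a b <= 2*s+2-s ->
    ~~ ((a == 0) && (b == s+1)) -> ~~ ((a == s+1) && (b == 0)) -> q a || q b) ->
 s+2 <= \sum_(0 <= j < s.+1) (q j + q (j + (s+1))).
Proof.
move=> hs H.
have ant j : 1 <= j <= s -> q j || q (j + (s+1)).
  by move=> hj; apply: H; rewrite /dist; lia.
have A j : j < s -> q j.+1 || q (j + (s+1)).
  by move=> hj; apply: H; rewrite /dist; lia.
have B j : j < s -> q j || q (j.+1 + (s+1)).
  by move=> hj; apply: H; rewrite /dist; lia.
have W1 : q 0 || q s by apply: H; rewrite /dist; lia.
have W2 : q (0 + (s+1)) || q (s + (s+1)) by apply: H; rewrite /dist; lia.
case q0: (q 0); case qs: (q (0 + (s+1))).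
4: {
  have qS : q s by move: W1; rewrite q0.
  have q2 : q (s + (s+1)) by move: W2; rewrite qs.
  have qa : q (0.+1 + (s+1)) by have := B 0 (ltnW (ltnW hs)); rewrite q0.
  have qb : q 1 by have := A 0 (ltnW (ltnW hs)); rewrite qs orbF.
  rewrite big_nat_recl //=.
  have : s.+2 <= \sum_(0 <= i < s) (q i.+1 + q (i.+1 + (s + 1))).
    apply: (@sumL3 s (fun i => q i.+1 + q (i.+1 + (s + 1)))) => //=.
    - lia.
    - by rewrite /= qb qa.
    - by rewrite prednK ?qS ?q2 //; lia.
    - move=> j hj; have := ant j.+1; case: (q _); case: (q _) => //; lia.
  lia. }
all: have all1 : forall j, j < s.+1 -> 1 <= q j + q (j + (s+1));
  [ by move=> [|j] hj; [rewrite q0 qs | have := ant j.+1; case: (q _); case: (q _) => //; lia] | ].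
all: case: (boolP [exists j : 'I_(s.+1), q j && q (j + (s+1))]) =>
   [/existsP [j /andP [h1 h2]] | /existsPn hno];
   [ by have := @sumL2 s.+1 (fun j => q j + q (j + (s+1))) j (ltn_ord j); rewrite /= h1 h2 => /(_ isT all1); lia | ].
all: have cmp : forall j, j <= s -> q (j + (s+1)) = ~~ q j;
  [ move=> j hj; have := hno (Ordinal (_ : j < s.+1)); have := all1 j;
    case: (q _); case: (q _) => //=; lia | ].
all: try (have allq : forall j, j <= s -> q j;
  [ elim => // j IH hj; have := A j hj; rewrite cmp ?IH //; lia
  | move: W2; rewrite !cmp ?allq //; lia ]).
all: have allq : forall j, j <= s -> ~~ q j;
  [ elim => [|j IH hj]; [by rewrite q0 | have := B j hj; rewrite cmp // (negbTE (IH (ltnW hj)))//=]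
  | have := allq s (leqnn s); move: W1; rewrite q0 /=; by move=> -> ].
Qed.

Lemma stab_get n s (A : {set 'I_n}) (x y : 'I_n) : s_stable s A -> x \in A -> y \in A -> x != y ->
  s <= dist x y /\ dist x y <= n - s.
Proof.
move=> /forallP/(_ x)/implyP hA hx hy hxy.
by move: (hA hx) => /forallP/(_ y)/implyP/(_ hy)/implyP/(_ hxy)/andP.
Qed.

Arguments stab_get {n s A x y}.

Lemma dist_sym a b : dist a b = dist b a.
Proof. by rewrite /dist maxnC minnC. Qed.

Lemma stab_pair s (x y : 'I_(2*s+2)) : x != y -> s <= dist x y -> dist x y <= 2*s+2-s ->
  [set x; y] \in KG_stab_V (2*s+2) 2 s.
Proof.
move=> hxy h1 h2; rewrite inE cards2 hxy /=.
apply/forallP => i; apply/implyP => hi; apply/forallP => j; apply/implyP => hj.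
rewrite !inE in hi hj.
case/orP: hi => /eqP ->; case/orP: hj => /eqP ->; rewrite ?eqxx //=; apply/implyP => _.
  all: move: h1 h2; rewrite /dist; lia.
Qed.

Lemma V_small s (A : {set 'I_(2*s+2)}) : A \in KG_stab_V (2*s+2) 2 s -> exists i, (i \in A) && (i <= s+1).
Proof.
rewrite inE => /andP [/cards2P [x [y [hxy hA]]] hst].
have xA : x \in A by rewrite hA !inE eqxx.
have yA : y \in A by rewrite hA !inE eqxx orbT.
have [h1 h2] := stab_get hst xA yA hxy.
case: (leqP x (s+1)) => hx; first by exists x; rewrite xA hx.
case: (leqP y (s+1)) => hy; first by exists y; rewrite yA hy.
have := ltn_ord x; have := ltn_ord y; move: h1; rewrite /dist; lia.
Qed.
Arguments V_small {s A}.
Arguments stab_pair {s x y}.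
Arguments comb {s q}.

Lemma triangle s a b z : 3 <= s -> a < 2*s+2 -> b < 2*s+2 -> z < 2*s+2 ->
  s <= dist a b -> dist a b <= 2*s+2-s -> s <= dist b z -> dist b z <= 2*s+2-s ->
  s <= dist a z -> dist a z <= 2*s+2-s -> False.
Proof. rewrite /dist; lia. Qed.

Theorem mainTheorem3 (s : nat) (hs : 3 <= s) :
  chromatic_number (KG_stab_V (2 * s + 2) 2 s) (@KG_adj (2 * s + 2)) (s + 2) /\
  ~ chi_critical (KG_stab_V (2 * s + 2) 2 s) (@KG_adj (2 * s + 2)).
Proof.
have hn0 : 0 < 2*s+2 by lia.
have hn1 : s+1 < 2*s+2 by lia.
pose o0 : 'I_(2*s+2) := Ordinal hn0.
pose o1 : 'I_(2*s+2) := Ordinal hn1.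
pose V := KG_stab_V (2*s+2) 2 s.
have e0V : [set o0; o1] \in V.
  apply: stab_pair; rewrite /dist /=; [rewrite -val_eqE /=|..]; lia.
pose U := V :\ [set o0; o1].
have UV : U \subset V by apply: subD1set.
have UinV : forall v, v \in U -> v \in V by move=> v /(subsetP UV).
have colV : colorable V (@KG_adj _) (s+2).
  exists (fun A : {set 'I_(2*s+2)} => if [pick i : 'I_(2*s+2) in A | i <= s+1] is Some i then nat_of_ord i else 0). split.
  - move=> A AV; case: pickP => [i /andP [_ hi] | _]; lia.
  - move=> A B AV BV hd.
    case: pickP => [i /andP [iA _] | hn]; last first.
      by case: (V_small AV) => z hz; move: (hn z); rewrite hz.
    case: pickP => [j /andP [jB _] | hn]; last first.
      by case: (V_small BV) => z hz; move: (hn z); rewrite hz.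
    move=> /ord_inj hij; subst j.
    by move: hd; rewrite /KG_adj => /disjointFr/(_ iA); rewrite jB.
have LB : forall k, colorable U (@KG_adj _) k -> s+2 <= k.
  move=> k [f [hf hp]]; rewrite leqNgt; apply/negP => hk.
  have ndis : forall w w', w \in U -> w' \in U -> f w = f w' -> ~~ [disjoint w & w'].
    move=> w w' wU w'U h; apply/negP => hd; exact: (hp w w' wU w'U hd h).
  have center : forall c, exists p : 'I_(2*s+2), [forall v in U, (f v == c) ==> (p \in v)].
    move=> c; case: (boolP [exists v in U, f v == c]) =>
      [/existsP [v /andP [vU /eqP fv]] | /existsPn hno]; last first.
      exists o0; apply/forallP => v; apply/implyP => vU; move: (hno v); rewrite vU /=.
      by move/negbTE ->.
    have := UinV v vU; rewrite inE => /andP [/cards2P [a [b [hab hv]]] vst].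
    case: (boolP [forall w in U, (f w == c) ==> (a \in w)]) => [ha|]; first by exists a.
    case: (boolP [forall w in U, (f w == c) ==> (b \in w)]) => [hb|]; first by exists b.
    move=> /forallPn [w2]; rewrite negb_imply => /andP [w2U]; rewrite negb_imply => /andP [/eqP fw2 bw2].
    move=> /forallPn [w1]; rewrite negb_imply => /andP [w1U]; rewrite negb_imply => /andP [/eqP fw1 aw1].
    have bw1 : b \in w1.
      apply/negPn/negP => bn; move/negP: (ndis v w1 vU w1U (etrans fv (esym fw1))); apply.
      rewrite -setI_eq0; apply/eqP/setP => z; rewrite !inE hv !inE.
      apply/negbTE/negP => /andP [/orP [/eqP -> | /eqP ->] hz].
      - by move: aw1; rewrite hz.
      - by move: bn; rewrite hz.
    have aw2 : a \in w2.
      apply/negPn/negP => an; move/negP: (ndis v w2 vU w2U (etrans fv (esym fw2))); apply.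
      rewrite -setI_eq0; apply/eqP/setP => z; rewrite !inE hv !inE.
      apply/negbTE/negP => /andP [/orP [/eqP -> | /eqP ->] hz].
      - by move: an; rewrite hz.
      - by move: bw2; rewrite hz.
    have := ndis w1 w2 w1U w2U (etrans fw1 (esym fw2)).
    rewrite -setI_eq0 => /set0Pn [z]; rewrite inE => /andP [zw1 zw2].
    have za : z != a by apply: contraNneq aw1 => <-.
    have zb : z != b by apply: contraNneq bw2 => <-.
    have := UinV w1 w1U; rewrite inE => /andP [_ st1].
    have := UinV w2 w2U; rewrite inE => /andP [_ st2].
    have av : a \in v by rewrite hv !inE eqxx.
    have bv : b \in v by rewrite hv !inE eqxx orbT.
    have [d1 d2] := stab_get vst av bv hab.
    have bz : b != z by rewrite eq_sym.
    have [d3 d4] := stab_get st1 bw1 zw1 bz.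
    have az : a != z by rewrite eq_sym.
    have [d5 d6] := stab_get st2 aw2 zw2 az.
    by case: (@triangle s a b z hs (ltn_ord a) (ltn_ord b) (ltn_ord z) d1 d2 d3 d4 d5 d6).
  pose g := fun c => odflt o0 [pick p | [forall v in U, (f v == c) ==> (p \in v)]].
  have hg : forall v, v \in U -> g (f v) \in v.
    move=> v vU; rewrite /g; case: pickP => [p | hn] /=.
      by move=> /forallP /(_ v) /implyP /(_ vU) /implyP /(_ (eqxx _)).
    by case: (center (f v)) => p hp0; rewrite hn in hp0.
  pose P := (fun c : 'I_k => g c) @: [set: 'I_k].
  have cP : #|P| <= k by have := leq_imset_card (fun c : 'I_k => g c) [set: 'I_k]; rewrite cardsT card_ord.
  have hgP : forall v, v \in U -> g (f v) \in P.
    by move=> v vU; apply/imsetP; exists (Ordinal (hf v vU)); rewrite ?inE.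
  pose q := fun a : nat => [exists i in P, (i : nat) == a].
  have qE : forall i : 'I_(2*s+2), q i = (i \in P).
    move=> i; apply/existsP/idP => [[j /andP [jP /eqP hji]] | iP].
    - by rewrite -(val_inj hji).
    - by exists i; rewrite iP eqxx.
  have H : forall a b, a < 2*s+2 -> b < 2*s+2 -> a != b -> s <= dist a b -> dist a b <= 2*s+2-s ->
      ~~ ((a == 0) && (b == s+1)) -> ~~ ((a == s+1) && (b == 0)) -> q a || q b.
    move=> a b ha hb hab h1 h2 he1 he2.
    pose x : 'I_(2*s+2) := Ordinal ha; pose y : 'I_(2*s+2) := Ordinal hb.
    have xy : x != y := hab.
    have vV : [set x; y] \in V := stab_pair xy h1 h2.
    have vU : [set x; y] \in U.
      rewrite /U in_setD1 vV andbT; apply/negP => /eqP he.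
      have : x \in [set o0; o1] by rewrite -he !inE eqxx.
      have : y \in [set o0; o1] by rewrite -he !inE eqxx orbT.
      rewrite !inE -!val_eqE /=; move: he1 he2 hab; lia.
    have := hg _ vU; have := hgP _ vU; move: (g _) => p pP; rewrite !inE => /orP [/eqP pe | /eqP pe]; subst p.
    - by apply/orP; left; apply/existsP; exists x; rewrite pP eqxx.
    - by apply/orP; right; apply/existsP; exists y; rewrite pP eqxx.
  have cardP : #|P| = \sum_(0 <= j < s.+1) (q j + q (j + (s+1))).
    rewrite -sum1_card big_mkcond /=.
    rewrite (eq_bigr (fun i : 'I_(2*s+2) => nat_of_bool (q i))); last by move=> i _; rewrite qE; case: (i \in P).
    rewrite -(big_mkord xpredT (fun i => nat_of_bool (q i))).
    rewrite (@big_cat_nat _ _ _ s.+1) //=; last by lia.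
    have hsh := @big_addn nat 0 addn 0 (2*s+2) (s.+1) xpredT (fun i => nat_of_bool (q i)).
    rewrite add0n (_ : 2*s+2 - s.+1 = s.+1) in hsh; last by lia.
    rewrite hsh big_split /=.
    by rewrite addn1.
  have := comb hs H; rewrite -cardP; lia.
have colU : colorable U (@KG_adj _) (s+2).
  case: colV => f [h1 h2]; exists f; split => [x xU | x y xU yU]; [exact: h1 (UinV _ xU) | exact: h2 (UinV _ xU) (UinV _ yU)].
have chiU : chromatic_number U (@KG_adj _) (s+2) by split.
have chiV : chromatic_number V (@KG_adj _) (s+2).
  split => // k [f [h1 h2]]; apply: LB; exists f; split => [x xU | x y xU yU]; [exact: h1 (UinV _ xU) | exact: h2 (UinV _ xU) (UinV _ yU)].
split => // crit.
by have := crit U (properD1 e0V) _ _ chiU chiV; rewrite ltnn.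
Qed.
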